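(* Consider the click-through auction setting below with $n=2$ bidders and arbitrary known values $v_1,v_2\ge 0$. For every information structure that is both calibrated and independent, its expected revenue is at most $\min\big(v_1\mathbb{E}[r_1],\,v_2\mathbb{E}[r_2]\big)$, which is the expected revenue of the no-disclosure information structure. In particular, no independent calibrated information structure (including full disclosure) yields strictly more revenue than no disclosure.
   Context: Setting. There are $n\ge 2$ bidders; bidder $i$ has a known value per click $v_i\ge 0$. A vector of click-through rates (CTRs) $r=(r_1,\dots,r_n)\in[0,1]^n$ is drawn from a prior distribution $G$ with finite support (probability mass function $g$). An information structure is a probability distribution $x$ with finite support on pairs $(r,s)\in[0,1]^n\times[0,1]^n$ whose $r$-marginal is $G$, i.e. $\sum_s x(r,s)=g(r)$ for all $r$; $s=(s_1,\dots,s_n)$ is the vector of signals (scores). Given $s$, the winner $i^*$ is a bidder maximizing $v_is_i$, ties broken uniformly at random; the winner's price per click is $p_{i^*}=\max_{j\neq i^*}v_js_j/s_{i^*}$ (revenue is taken to be $0$ if $s_{i^*}=0$), and the winner pays only upon a click, which occurs with probability $r_{i^*}$. The revenue of an information structure is $\mathrm{Rev}=\mathbb{E}[r_{i^*}p_{i^*}]$, the expectation taken over $(r,s)\sim x$ and tie-breaking. An information structure is calibrated if $\mathbb{E}[r_i\mid s_i=t]=t$ for every bidder $i$ and every $t$ with $\Pr[s_i=t]>0$. It is independent if $\mathbb{E}[r_i\mid s]=\mathbb{E}[r_i\mid s_i]$ for every $i$ and every $s$ in the support; otherwise it is correlated. Full disclosure is the structure with $s=r$ almost surely; no disclosure is the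 structure with $s_i=\mathbb{E}[r_i]$ almost surely for every $i$. *)

(* Defs.v *)
From HB Require Import structures.
From mathcomp Require Import all_boot all_order all_algebra.
From mathcomp Require Import reals.
Set Implicit Arguments. Unset Strict Implicit. Unset Printing Implicit Defensive.
Import Order.TTheory GRing.Theory Num.Theory.
Local Open Scope ring_scope.

(* A finitely supported information structure is represented as a finite
   probability space (I, p) carrying the random CTR vector r and the random
   signal vector s; the distribution x of (r,s) is the pushforward of p.  The
   prior G is the r-marginal of x. *)

Section Auction.
Variables (R : realType) (n : nat) (I : finType).
Variable (p : I -> R).

Definition is_prob : Prop := (forall k, 0 <= p k) /\ \sum_k p k = 1.

Definition prob (P : pred I) : R := \sum_(k | P k) p k.

Definition expect (X : I -> R) : R := \sum_k p k * X k.

(* conditional expectation E[X | P] (only used when prob P > 0) *)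
Definition condE (X : I -> R) (P : pred I) : R :=
  (\sum_(k | P k) p k * X k) / prob P.

Variables (r s : I -> 'I_n -> R).

Definition calibrated : Prop :=
  forall (i : 'I_n) (t : R), 0 < prob (fun k => s k i == t) ->
    condE (fun k => r k i) (fun k => s k i == t) = t.

Definition independent : Prop :=
  forall (i : 'I_n) (k0 : I), 0 < p k0 ->
    condE (fun k => r k i) (fun k => [forall j, s k j == s k0 j]) =
    condE (fun k => r k i) (fun k => s k i == s k0 i).

Variable (v : 'I_n -> R).

Definition winner (t : 'I_n -> R) (i : 'I_n) : bool :=
  [forall j, v j * t j <= v i * t i].

Definition price (t : 'I_n -> R) (i : 'I_n) : R :=
  if t i == 0 then 0
  else (\big[Num.max/0]_(j | j != i) (v j * t j)) / t i.

(* expected revenue at an outcome (rr, t), averaging over uniform tie-breaking *)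
Definition rev_at (rr t : 'I_n -> R) : R :=
  (\sum_(i | winner t i) rr i * price t i) / (#|[set i | winner t i]|)%:R.

Definition revenue : R := \sum_k p k * rev_at (r k) (s k).

End Auction.

Definition nodisc (R : realType) (n : nat) (I : finType) (p : I -> R)
  (r : I -> 'I_n -> R) : I -> 'I_n -> R :=
  fun _ i => expect p (fun k => r k i).

(* Main.v *)
Require Import Defs.
From HB Require Import structures.
From mathcomp Require Import all_boot all_order all_algebra.
From mathcomp Require Import reals ring lra.
From Stdlib Require Import FunctionalExtensionality.
Set Implicit Arguments. Unset Strict Implicit.
Import Order.TTheory GRing.Theory Num.Theory.
Local Open Scope ring_scope.

Section K.
Variables (R : realType) (I : finType) (p : I -> R) (n : nat) (r s : I -> 'I_n -> R).
Hypothesis p0 : forall k, 0 <= p k.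

Let C (k k' : I) : bool := [forall j, s k' j == s k j].
Let P k := prob p (fun k' => C k k').

Lemma Csym k k' : C k k' = C k' k.
Proof. by apply/forallP/forallP => H j; rewrite eq_sym; apply: H. Qed.

Lemma Ctrans k k' x : C k k' -> C k x = C k' x.
Proof.
move=> /forallP H; apply/forallP/forallP => H2 j; move: (H j) (H2 j) => /eqP a /eqP b;
  apply/eqP; rewrite b ?a //.
Qed.

Lemma P_ge k : p k <= P k.
Proof.
rewrite /P /prob (bigD1 k) /=; last by apply/forallP.
rewrite lerDl; apply: sumr_ge0 => ? _; exact: p0.
Qed.

Lemma stepA (h : I -> R) :
  \sum_k' p k' * h k' = \sum_k p k / P k * \sum_(k' | C k k') p k' * h k'.
Proof.
transitivity (\sum_k \sum_k' (if C k k' then p k / P k * (p k' * h k') else 0)); last first.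
  apply: eq_bigr => k _; rewrite mulr_sumr [RHS]big_mkcond /=.
  by apply: eq_bigr => k' _; case: ifP.
rewrite exchange_big; apply: eq_bigr => k' _.
transitivity (p k' * h k' * (\sum_(k | C k k') p k / P k')); last first.
  rewrite mulr_sumr big_mkcond; apply: eq_bigr => k _; case: ifP => // Hc.
  rewrite /P.
  have -> : prob p (fun x => C k x) = prob p (fun x => C k' x).
    by apply: eq_bigl => x; rewrite (@Ctrans k k' x Hc).
  by rewrite /=; ring.
rewrite -mulr_suml.
have -> : \sum_(k | C k k') p k = P k' by apply: eq_bigl => x; rewrite Csym.
have [PE|nz] := eqVneq (P k') 0.
  have : p k' = 0 by apply/eqP; rewrite eq_le p0 andbT -[X in _ <= X]PE; apply: P_ge.
  by move=> ->; rewrite !mul0r.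
by rewrite divff // mulr1.
Qed.

Lemma key (i : 'I_n) (f : I -> R) (Hf : forall k k', C k k' -> f k' = f k)
  (cal : calibrated p r s) (ind : independent p r s) :
  \sum_k p k * (r k i * f k) = \sum_k p k * (s k i * f k).
Proof.
rewrite stepA; apply: eq_bigr => k _.
have -> : \sum_(k' | C k k') p k' * (r k' i * f k') = f k * \sum_(k' | C k k') p k' * r k' i.
  rewrite mulr_sumr; apply: eq_bigr => k' Hc; rewrite (Hf _ _ Hc); ring.
have [pk0|pkpos] := eqVneq (p k) 0.
  by rewrite pk0 !mul0r.
have pk : 0 < p k by rewrite lt0r pkpos p0.
have E1 := ind i k pk.
have E2 : condE p (fun k' => r k' i) (fun k' => s k' i == s k i) = s k i.
  apply: cal; apply: lt_le_trans pk _; rewrite /prob (bigD1 k) //= lerDl.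
  by apply: sumr_ge0 => ? _; exact: p0.
rewrite E2 /condE in E1.
rewrite -E1 /P /C /=; ring.
Qed.
End K.
Section A.
Variables (R : realType) (v : 'I_2 -> R).

Lemma sum2 (F : 'I_2 -> R) : \sum_i F i = F ord0 + F ord_max.
Proof. by rewrite big_ord_recr big_ord1 /=; congr (F _ + _); apply: val_inj. Qed.

Lemma ord2E (j : 'I_2) : j = ord0 \/ j = ord_max.
Proof. by case: j => [[|[|m]] H]; [left|right|]; try apply: val_inj. Qed.

Lemma neq0 (j : 'I_2) : (j != ord0) = (j == ord_max).
Proof. by case: (ord2E j) => ->. Qed.
Lemma neqm (j : 'I_2) : (j != ord_max) = (j == ord0).
Proof. by case: (ord2E j) => ->. Qed.

Lemma price0 t : price v t ord0 =
  if t ord0 == 0 then 0 else Num.max (v ord_max * t ord_max) 0 / t ord0.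
Proof. by rewrite /price (big_pred1_id _ _ _ neq0). Qed.
Lemma pricem t : price v t ord_max =
  if t ord_max == 0 then 0 else Num.max (v ord0 * t ord0) 0 / t ord_max.
Proof. by rewrite /price (big_pred1_id _ _ _ neqm). Qed.

Lemma winnerE t i : winner v t i =
  (v ord0 * t ord0 <= v i * t i) && (v ord_max * t ord_max <= v i * t i).
Proof.
apply/forallP/andP => [H|[H1 H2] j]; first by split; apply: H.
by case: (ord2E j) => ->.
Qed.

Definition G t i := (if winner v t i then price v t i else 0) /
   (#|[set j | winner v t j]|)%:R.

Lemma rev_lin rr t : rev_at v rr t = \sum_i rr i * G t i.
Proof.
rewrite /rev_at /G big_mkcond mulr_suml; apply: eq_bigr => i _.
by case: ifP => _; rewrite ?mul0r ?mulr0 ?mulrA.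
Qed.

Hypothesis v0 : forall i, 0 <= v i.

Lemma rev_self t : 0 <= t ord0 -> 0 <= t ord_max ->
  rev_at v t t = Num.min (v ord0 * t ord0) (v ord_max * t ord_max).
Proof.
move=> h0 hm.
have ha : 0 <= v ord0 * t ord0 by apply: mulr_ge0.
have hb : 0 <= v ord_max * t ord_max by apply: mulr_ge0.
rewrite /rev_at -sum1_card.
rewrite natr_sum.
rewrite big_mkcond [X in _ / X]big_mkcond /= !sum2 !inE !winnerE price0 pricem.
rewrite (max_l ha) (max_l hb) (le_refl (v ord0 * t ord0)) (le_refl (v ord_max * t ord_max)) /=.
have [E0|N0] := eqVneq (t ord0) 0;
have [Em|Nm] := eqVneq (t ord_max) 0.
- by rewrite E0 Em !mulr0 le_refl /= add0r mul0r min_l.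
- rewrite E0 !mulr0 in ha h0 *; rewrite mul0r !mulr0 hb /= if_same add0r mul0r min_l //.
- rewrite Em !mulr0 in hb hm *; rewrite mul0r !mulr0 ha /= if_same addr0 mul0r min_r //.
- have -> : t ord0 * (v ord_max * t ord_max / t ord0) = v ord_max * t ord_max by rewrite mulrC divfK.
  have -> : t ord_max * (v ord0 * t ord0 / t ord_max) = v ord0 * t ord0 by rewrite mulrC divfK.
  rewrite andbT.
  case: (lerP (v ord0 * t ord0) (v ord_max * t ord_max)) => h1;
  case: (lerP (v ord_max * t ord_max) (v ord0 * t ord0)) => h2 /=.
  + have -> : v ord0 * t ord0 = v ord_max * t ord_max by apply/le_anti; rewrite h1 h2.
    field; lra.
  + rewrite !add0r divr1 //.
  + rewrite !addr0 divr1 //.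
  + lra.
Qed.
End A.

Lemma minle1 (R : realType) (a b : R) : Num.min a b <= a.
Proof. by rewrite ge_min lexx. Qed.
Lemma minle2 (R : realType) (a b : R) : Num.min a b <= b.
Proof. by rewrite ge_min lexx orbT. Qed.

Theorem mainTheorem1 (R : realType) (I : finType) (p : I -> R)
    (r s : I -> 'I_2 -> R) (v : 'I_2 -> R) :
  (forall i, 0 <= v i) ->
  is_prob p ->
  (forall k i, 0 <= r k i <= 1) ->
  (forall k i, 0 <= s k i <= 1) ->
  calibrated p r s ->
  independent p r s ->
  revenue p r s v <= Num.min (v ord0 * expect p (fun k => r k ord0))
                             (v ord_max * expect p (fun k => r k ord_max))
  /\ revenue p r (nodisc p r) v =
     Num.min (v ord0 * expect p (fun k => r k ord0))
             (v ord_max * expect p (fun k => r k ord_max)).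
Proof.
move=> hv [p0 p1] hr hs cal ind.
have key' i (F : ('I_2 -> R) -> R) :
    \sum_k p k * (r k i * F (s k)) = \sum_k p k * (s k i * F (s k)).
  apply: key => // k k' Hc; congr F; apply: functional_extensionality => j.
  by move/forallP: Hc => /(_ j)/eqP.
have Es i : expect p (fun k => r k i) = expect p (fun k => s k i).
  by have := key' i (fun _ => 1); rewrite /expect; under eq_bigr do rewrite mulr1;
    under [in X in _ = X -> _]eq_bigr do rewrite mulr1.
split.
- rewrite /revenue.
  have -> : \sum_k p k * rev_at v (r k) (s k) = \sum_k p k * rev_at v (s k) (s k).
    under eq_bigr do rewrite rev_lin mulr_sumr.
    under [RHS]eq_bigr do rewrite rev_lin mulr_sumr.
    rewrite exchange_big [RHS]exchange_big; apply: eq_bigr => i _.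
    exact: (key' i (fun t => G v t i)).
  have -> : \sum_k p k * rev_at v (s k) (s k) =
      \sum_k p k * Num.min (v ord0 * s k ord0) (v ord_max * s k ord_max).
    apply: eq_bigr => k _; rewrite rev_self //.
      by case/andP: (hs k ord0).
    by case/andP: (hs k ord_max).
  rewrite le_min; apply/andP; split; rewrite Es /expect mulr_sumr;
    apply: ler_sum => k _; rewrite [X in _ <= X]mulrCA; apply: ler_wpM2l; try exact: p0; first [exact: minle1|exact: minle2].
- rewrite /revenue /nodisc.
  under eq_bigr do rewrite rev_lin mulr_sumr.
  rewrite exchange_big.
  have eg i : 0 <= expect p (fun k => r k i).
    apply: sumr_ge0 => k _; apply: mulr_ge0 => //; by case/andP: (hr k i).
  have H := @rev_self R v hv (fun i => expect p (fun k => r k i)) (eg ord0) (eg ord_max).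
  cbv beta in H; rewrite -H rev_lin.
  apply: eq_bigr => i _; rewrite /expect mulr_suml; apply: eq_bigr => k _; ring.
Qed.
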